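(* Let $N_1,\dots,N_R$ be produced by the tree-based resampling algorithm described in the context with probabilities $\pi_1,\dots,\pi_R$ and $N$ particles. Then for every $\varepsilon>0$, $$\sup_{A\subset\{1,\dots,R\}}\mathbf P\Big[\Big|\sum_{j\in A}(N_j-N\pi_j)\Big|\ge\varepsilon\Big]\le2\exp(-4\varepsilon^2/R).$$
   Context: Tree-based resampling: given probabilities $\pi_1,\dots,\pi_R$ and $N\in\mathbb N$, fix an arbitrary binary tree with $R$ leaves labelled $1,\dots,R$; identify each node $\alpha$ with the set of leaves below it and put $\mu_\alpha=N\sum_{j\in\alpha}\pi_j$. $N$ particles start at the root and are propagated down: for each node $\alpha$ the number $N_\alpha$ of particles passing through $\alpha$ satisfies $N_\alpha\in\{\lfloor\mu_\alpha\rfloor,\lfloor\mu_\alpha\rfloor+1\}$ and $\mathbf E[N_\alpha]=\mu_\alpha$; at each internal node the split of the arriving particles between its two children is either deterministic or a random choice between two possibilities with given probabilities, and the random choices at different nodes are made independently. $N_j$ is the number of particles ending at leaf $j$. *)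

(* Defs.v *)
From HB Require Import structures.
From mathcomp Require Import all_boot all_order all_algebra.
From mathcomp Require Import reals.
From mathcomp.analysis Require Import sequences exp.
From Stdlib Require List.
Set Implicit Arguments. Unset Strict Implicit. Unset Printing Implicit Defensive.
Import Order.TTheory GRing.Theory Num.Theory.
Local Open Scope ring_scope.

(* The rule [s : nat -> nat * nat * rT] of a node
   says: if [n] particles arrive at the node, then with probability [q]
   the left child receives [minn a n] particles (and the right child the
   remaining [n - minn a n]), and with probability [1 - q] the left child
   receives [minn b n] (and the right child the rest), where
   [s n = (a, b, q)].  A deterministic split is the case a = b (or q = 1).
   The [minn] only ensures that particles are conserved. *)
Inductive rtree (rT : Type) (R : nat) :=
| RLeaf of 'I_R
| RNode of (nat -> nat * nat * rT) & rtree rT R & rtree rT R.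

Arguments RLeaf {rT R}.
Arguments RNode {rT R}.

Section Resampling.
Variables (rT : realType) (R : nat).

(* leaves below a node (the node is identified with this set of leaves) *)
Fixpoint leaves (t : rtree rT R) : seq 'I_R :=
  match t with
  | RLeaf j => [:: j]
  | RNode _ l r => leaves l ++ leaves r
  end.

Fixpoint subtrees (t : rtree rT R) : seq (rtree rT R) :=
  t :: match t with
       | RLeaf _ => [::]
       | RNode _ l r => subtrees l ++ subtrees r
       end.

Fixpoint rules_ok (t : rtree rT R) : Prop :=
  match t with
  | RLeaf _ => True
  | RNode s l r => (forall n, 0 <= (s n).2 <= 1) /\ rules_ok l /\ rules_ok r
  end.

Definition outcome := {ffun 'I_R -> nat}.

(* Law of the vector (N_j)_j of leaf counts when [n] particles enter the
   (sub)tree [t], as a finite list of (probability, outcome) pairs.  The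
   random choices at different nodes are independent: the two subtrees
   below a node are run independently given the split. *)
Fixpoint dist (t : rtree rT R) (n : nat) : seq (rT * outcome) :=
  match t with
  | RLeaf j => [:: (1, [ffun i => if i == j then n else 0%N])]
  | RNode s l r =>
      let: (a, b, q) := s n in
      [seq (q * x.1 * y.1, [ffun i => (x.2 i + y.2 i)%N])
         | x : rT * outcome <- dist l (minn a n), y : rT * outcome <- dist r (n - minn a n)] ++
      [seq ((1 - q) * x.1 * y.1, [ffun i => (x.2 i + y.2 i)%N])
         | x : rT * outcome <- dist l (minn b n), y : rT * outcome <- dist r (n - minn b n)]
  end.

Definition Prob (d : seq (rT * outcome)) (E : pred outcome) : rT :=
  \sum_(x <- d | E x.2) x.1.

Definition Expect (d : seq (rT * outcome)) (X : outcome -> rT) : rT :=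
  \sum_(x <- d) x.1 * X x.2.

Definition Nnode (alpha : rtree rT R) (x : outcome) : nat :=
  (\sum_(j <- leaves alpha) x j)%N.

Definition mu (N : nat) (pi : 'I_R -> rT) (alpha : rtree rT R) : rT :=
  N%:R * \sum_(j <- leaves alpha) pi j.

Definition tree_resampling (N : nat) (pi : 'I_R -> rT) (t : rtree rT R) : Prop :=
  [/\ perm_eq (leaves t) (enum 'I_R),
      rules_ok t &
      forall alpha, List.In alpha (subtrees t) ->
        (forall x, x \in dist t N -> 0 < x.1 ->
           ((Nnode alpha x.2)%:Z == Num.floor (mu N pi alpha))
           || ((Nnode alpha x.2)%:Z == Num.floor (mu N pi alpha) + 1))
        /\ Expect (dist t N) (fun x => (Nnode alpha x)%:R) = mu N pi alpha].

End Resampling.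

(* Main.v *)
Require Import Defs.
From HB Require Import structures.
From mathcomp Require Import all_boot all_order all_algebra.
From mathcomp Require Import reals.
From mathcomp.analysis Require Import sequences exp.
From mathcomp Require Import ring lra zify.
From mathcomp Require Import boolp classical_sets functions topology normedtype derive realfun.
From Stdlib Require List.
Set Implicit Arguments. Unset Strict Implicit. Unset Printing Implicit Defensive.
Import Order.TTheory GRing.Theory Num.Theory.
Import numFieldNormedType.Exports.
Local Open Scope ring_scope.

Section H.
Variable R : realType.
Variable P : R.
Hypothesis P01 : 0 <= P <= 1.

Definition DD (y : R) := 1 - P + P * expR y.

Lemma DD_gt0 y : 0 < DD y.
Proof.
rewrite /DD; case/andP: P01 => P0 P1.
have := expR_gt0 y; case: (ltrP 0 P) => hP he.
  have : 0 < P * expR y by rewrite mulr_gt0.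
  lra.
have -> : P = 0 by lra.
lra.
Qed.

Lemma dDD (x : R) : is_derive x 1 DD (P * expR x).
Proof.
rewrite /DD.
have h1 : is_derive x 1 (fun y : R => P * expR y) (P * expR x).
  exact: (is_deriveZ P (is_derive_expR x)).
have h2 : is_derive x 1 (fun y : R => 1 - P) 0 by exact: is_derive_cst.
have := is_deriveD h2 h1; rewrite add0r; exact.
Qed.

Definition mm (y : R) := 4^-1 * y - (1 - P) + (1 - P) * (DD y)^-1.
Definition mm' (x : R) := 4^-1 * 1 + (1 - P) * (- (DD x) ^- 2 * (P * expR x)).

Lemma dmm (x : R) : is_derive x 1 mm (mm' x).
Proof.
rewrite /mm /mm'.
have h1 : is_derive x 1 (fun y : R => 4^-1 * y) (4^-1 * 1).
  exact: (is_deriveZ (4^-1 : R) (is_derive_id x 1)).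
have h2 : is_derive x 1 (fun y : R => (1 - P) * (DD y)^-1) ((1 - P) * (- (DD x) ^- 2 * (P * expR x))).
  apply: (is_deriveZ (1 - P) (is_deriveV _ (dDD x))).
  by rewrite gt_eqF // DD_gt0.
have h3 : is_derive x 1 (fun y : R => 1 - P) 0 by exact: is_derive_cst.
have := is_deriveD (is_deriveB h1 h3) h2; rewrite subr0; exact.
Qed.

Lemma mm'_ge0 (x : R) : 0 <= mm' x.
Proof.
rewrite /mm'. have hD := DD_gt0 x. have he := expR_gt0 x.
case/andP: P01 => P0 P1.
have key : 4 * (1 - P) * (P * expR x) <= DD x ^+ 2.
  rewrite /DD; have : 0 <= (1 - P - P * expR x) ^+ 2 by apply: sqr_ge0.
  lra.
have -> : 4^-1 * 1 + (1 - P) * (- DD x ^- 2 * (P * expR x)) =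
  (DD x ^+ 2 - 4 * (1 - P) * (P * expR x)) / (4 * DD x ^+ 2).
  by field; rewrite gt_eqF.
apply: divr_ge0; last by rewrite mulr_ge0 // exprn_ge0 // ltW.
lra.
Qed.

Lemma mm_homo (x y : R) : x <= y -> mm x <= mm y.
Proof.
move=> xy.
have dv z : derivable mm z 1 by case: (dmm z).
apply: (@ger0_derive1_le_cc R mm x y) => //.
- move=> z _; rewrite derive1E; rewrite (@derive_val _ _ _ _ _ _ _ (dmm z)).
  exact: mm'_ge0.
- apply: derivable_within_continuous => z _; exact: dv.
- by rewrite in_itv /= lexx xy.
- by rewrite in_itv /= lexx xy.
Qed.

Lemma mm0 : mm 0 = 0.
Proof. rewrite /mm /DD expR0 mulr1 mulr0 subrK invr1 mulr1; ring. Qed.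

Definition gg (y : R) := - (P * y) - 8^-1 * (y * y).
Definition hh (y : R) := DD y * expR (gg y).

Lemma dhh (x : R) : is_derive x 1 hh (- DD x * mm x * expR (gg x)).
Proof.
have g1 : is_derive x 1 (fun y : R => P * y) (P * 1).
  exact: (is_deriveZ P (is_derive_id x 1)).
have g2 : is_derive x 1 (fun y : R => y * y) (x *: 1 + x *: 1).
  exact: (is_deriveM (is_derive_id x 1) (is_derive_id x 1)).
have g3 : is_derive x 1 (fun y : R => 8^-1 * (y * y)) (8^-1 * (x *: 1 + x *: 1)).
  exact: (is_deriveZ (8^-1 : R) g2).
have dg : is_derive x 1 gg (- (P * 1) - 8^-1 * (x *: 1 + x *: 1)).
  exact: (is_deriveB (is_deriveN g1) g3).
have de : is_derive x 1 (expR \o gg) (expR (gg x) * (- (P * 1) - 8^-1 * (x *: 1 + x *: 1))).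
  exact: (is_derive1_comp (is_derive_expR (gg x)) dg).
have H := is_deriveM (dDD x) de.
have -> : hh = (DD * (expR \o gg))%R by [].
apply: (is_derive_eq H).
rewrite /mm /= /DD /GRing.scale /=.
have hD := DD_gt0 x; rewrite /DD in hD.
field; rewrite gt_eqF //.
Qed.

Lemma hh_le1 (l : R) : hh l <= 1.
Proof.
have h0 : hh 0 = 1 by rewrite /hh /DD /gg expR0 !mulr0 mulr1 subr0 oppr0 expR0; ring.
rewrite -h0.
have dv z : derivable hh z 1 by case: (dhh z).
have dval z : derive1 hh z = - DD z * mm z * expR (gg z).
  by rewrite derive1E (@derive_val _ _ _ _ _ _ _ (dhh z)).
have hD z := DD_gt0 z; have hE z := expR_gt0 (gg z).
case: (lerP 0 l) => hl.
  apply: (@ler0_derive1_le_cc R hh 0 l) => //.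
  - move=> z; rewrite in_itv /= => /andP[z0 _]; rewrite dval.
    have : 0 <= mm z by rewrite -mm0 mm_homo // ltW.
    move=> hm; rewrite -mulrA mulNr oppr_le0.
    by apply: mulr_ge0; [exact: ltW | apply: mulr_ge0 => //; exact: ltW].
  - by apply: continuous_subspaceT => z; apply: differentiable_continuous; apply/derivable1_diffP; exact: dv.
  - by rewrite in_itv /= lexx hl.
  - by rewrite in_itv /= lexx hl.
apply: (@ger0_derive1_le_cc R hh l 0) => //.
- move=> z; rewrite in_itv /= => /andP[_ z0]; rewrite dval.
  have : mm z <= 0 by rewrite -mm0 mm_homo // ltW.
  move=> hm; rewrite -mulrA mulNr oppr_ge0.
  apply: mulr_ge0_le0; first exact: ltW.
  by apply: mulr_le0_ge0 => //; exact: ltW.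
- by apply: continuous_subspaceT => z; apply: differentiable_continuous; apply/derivable1_diffP; exact: dv.
- by rewrite in_itv /= lexx ltW.
- by rewrite in_itv /= lexx ltW.
- exact: ltW.
Qed.

Lemma hoeff_lemma (l : R) : 1 - P + P * expR l <= expR (P * l + 8^-1 * (l * l)).
Proof.
have := hh_le1 l; rewrite /hh -/(DD l).
have -> : gg l = - (P * l + 8^-1 * (l * l)) by rewrite /gg; ring.
rewrite expRN => H.
have he := expR_gt0 (P * l + 8^-1 * (l * l)).
by rewrite ler_pdivrMr // mul1r in H.
Qed.
End H.

Section Core.
Variables (rT : realType) (R : nat).
Local Notation tree := (rtree rT R).
Local Notation outc := (outcome R).
Implicit Types (t l r : tree) (d : seq (rT * outc)).

Lemma Expect_cat d1 d2 X : Expect (d1 ++ d2) X = Expect d1 X + Expect d2 X.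
Proof. by rewrite /Expect big_cat. Qed.

Lemma Expect_pairs (q : rT) d1 d2 (X phi psi : outc -> rT) :
  (forall x y, x \in d1 -> y \in d2 ->
     X [ffun i => (x.2 i + y.2 i)%N] = phi x.2 * psi y.2) ->
  Expect [seq (q * x.1 * y.1, [ffun i => (x.2 i + y.2 i)%N])
           | x : rT * outc <- d1, y : rT * outc <- d2] X
  = q * Expect d1 phi * Expect d2 psi.
Proof.
move=> H; rewrite /Expect big_allpairs_dep /=.
rewrite [q * _]mulr_sumr mulr_suml; apply: eq_big_seq => x xd1.
rewrite mulr_sumr; apply: eq_big_seq => y yd2.
rewrite H //; ring.
Qed.

Lemma Expect_node s l r n (X phi psi : outc -> rT) :
  (forall a c x y, x \in dist l a -> y \in dist r c ->
     X [ffun i => (x.2 i + y.2 i)%N] = phi x.2 * psi y.2) ->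
  Expect (dist (RNode s l r) n) X =
    (s n).2 * Expect (dist l (minn (s n).1.1 n)) phi
            * Expect (dist r (n - minn (s n).1.1 n)) psi
  + (1 - (s n).2) * Expect (dist l (minn (s n).1.2 n)) phi
            * Expect (dist r (n - minn (s n).1.2 n)) psi.
Proof.
move=> H /=; case: (s n) => [[a b] q] /=.
by rewrite Expect_cat !(@Expect_pairs _ _ _ _ phi psi) // => x y; apply: H.
Qed.

Lemma mem_node s l r n z : z \in dist (RNode s l r) n ->
  exists a x y, [/\ (a <= n)%N, x \in dist l a, y \in dist r (n - a),
     z.2 = [ffun i => (x.2 i + y.2 i)%N] &
     (z.1 = (s n).2 * x.1 * y.1 \/ z.1 = (1 - (s n).2) * x.1 * y.1)].
Proof.
rewrite /=; case: (s n) => [[a b] q] /=; rewrite mem_cat.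
case/orP => /allpairsPdep [x [y [xd yd ->]]].
  by exists (minn a n), x, y; split => //=; [exact: geq_minr | left].
by exists (minn b n), x, y; split => //=; [exact: geq_minr | right].
Qed.

Lemma dist_supp t n x j : x \in dist t n -> j \notin leaves t -> x.2 j = 0%N.
Proof.
elim: t n x => [j0|s l IHl r IHr] n x /=.
  by rewrite inE => /eqP -> /=; rewrite inE ffunE => /negPf ->.
move=> /mem_node [a [x1 [y1 [_ xd yd -> _]]]].
rewrite mem_cat negb_or => /andP[jl jr].
by rewrite ffunE (IHl _ _ xd jl) (IHr _ _ yd jr).
Qed.

Lemma dist_tot t n x : x \in dist t n -> (\sum_j x.2 j)%N = n.
Proof.
elim: t n x => [j0|s l IHl r IHr] n x /=.
  rewrite inE => /eqP -> /=; rewrite (bigD1 j0) //= ffunE eqxx big1 ?addn0 //.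
  by move=> i /negPf; rewrite ffunE => ->.
move=> /mem_node [a [x1 [y1 [an xd yd -> _]]]].
under eq_bigr do rewrite ffunE.
by rewrite big_split /= (IHl _ _ xd) (IHr _ _ yd) subnKC.
Qed.

Lemma dist_w1 t n : Expect (dist t n) (fun _ => 1) = 1.
Proof.
elim: t n => [j0|s l IHl r IHr] n.
  by rewrite /Expect big_seq1 /= !mulr1.
rewrite (@Expect_node _ _ _ _ _ (fun _ => 1) (fun _ => 1)) ?mulr1 // !IHl !IHr.
ring.
Qed.

Lemma dist_w_ge0 t n x : rules_ok t -> x \in dist t n -> 0 <= x.1.
Proof.
elim: t n x => [j0|s l IHl r IHr] n x /=.
  by rewrite inE => _ /eqP -> /=.
move=> [hs [okl okr]] /mem_node [a [x1 [y1 [_ xd yd _ [->|->]]]]].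
  by rewrite !mulr_ge0 // ?(IHl _ _ okl xd) ?(IHr _ _ okr yd) //; case/andP: (hs n).
rewrite !mulr_ge0 // ?(IHl _ _ okl xd) ?(IHr _ _ okr yd) //.
by case/andP: (hs n) => _; rewrite subr_ge0.
Qed.

Lemma exists_pos d : Expect d (fun _ => 1) = 1 -> exists2 x, x \in d & 0 < x.1.
Proof.
move=> H; case: (boolP (has (fun x : rT * outc => 0 < x.1) d)).
  by move=> /hasP [x xd hx]; exists x.
move=> /hasPn Hn; exfalso.
have : Expect d (fun _ => 1) <= 0.
  rewrite /Expect big_seq; apply: sumr_le0 => x xd.
  by rewrite mulr1 leNgt (Hn x xd).
by rewrite H ler10.
Qed.


Lemma node_memA s l r n x y :
  x \in dist l (minn (s n).1.1 n) -> y \in dist r (n - minn (s n).1.1 n) ->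
  ((s n).2 * x.1 * y.1, [ffun i => (x.2 i + y.2 i)%N]) \in dist (RNode s l r) n.
Proof.
rewrite /=; case: (s n) => [[a b] q] /= xd yd; rewrite mem_cat; apply/orP; left.
by apply/allpairsPdep; exists x, y.
Qed.

Lemma node_memB s l r n x y :
  x \in dist l (minn (s n).1.2 n) -> y \in dist r (n - minn (s n).1.2 n) ->
  ((1 - (s n).2) * x.1 * y.1, [ffun i => (x.2 i + y.2 i)%N]) \in dist (RNode s l r) n.
Proof.
rewrite /=; case: (s n) => [[a b] q] /= xd yd; rewrite mem_cat; apply/orP; right.
by apply/allpairsPdep; exists x, y.
Qed.

Lemma Nnode_add (b : tree) (x y : outc) :
  Nnode b [ffun i => (x i + y i)%N] = (Nnode b x + Nnode b y)%N.
Proof. by rewrite /Nnode -big_split /=; apply: eq_bigr => i _; rewrite ffunE. Qed.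

Lemma Nnode_zero (b : tree) (y : outc) : (forall j, j \in leaves b -> y j = 0%N) -> Nnode b y = 0%N.
Proof. by move=> H; rewrite /Nnode big1_seq // => j /andP[_ /H]. Qed.

Lemma Nnode_tot t (x : outc) : uniq (leaves t) ->
  (forall j, j \notin leaves t -> x j = 0%N) -> Nnode t x = (\sum_j x j)%N.
Proof.
move=> u H; rewrite /Nnode big_uniq //.
rewrite [RHS](bigID (fun j => j \in leaves t)) /= [X in (_ + X)%N]big1 ?addn0 //.
Qed.

Lemma sub_leaves t (b : tree) : List.In b (subtrees t) -> {subset leaves b <= leaves t}.
Proof.
elim: t => [j|s l IHl r IHr] /=.
  by case=> // <-.
case=> [<- //|H0] j jb; rewrite mem_cat.
case: (List.in_app_or _ _ _ H0) => H1.
  by rewrite (IHl H1 j jb).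
by rewrite (IHr H1 j jb) orbT.
Qed.

Lemma leaf_in t j : j \in leaves t -> List.In (RLeaf j) (subtrees t).
Proof.
elim: t => [j0|s l IHl r IHr] /=.
  by rewrite inE => /eqP ->; left.
rewrite mem_cat => /orP [/IHl H|/IHr H]; right; apply: List.in_or_app; [left|right] => //.
Qed.

Lemma subtrees_self t : List.In t (subtrees t).
Proof. by case: t => [j|s l r]; left. Qed.

Definition good (F : tree -> nat) t n :=
  forall x, x \in dist t n -> 0 < x.1 ->
  forall b, List.In b (subtrees t) ->
    Nnode b x.2 = F b \/ Nnode b x.2 = (F b).+1.

Lemma good_branch (F : tree -> nat) s l r n (q' : rT) a' :
  uniq (leaves l ++ leaves r) -> good F (RNode s l r) n -> 0 < q' -> (a' <= n)%N ->
  (forall x y, x \in dist l a' -> y \in dist r (n - a') ->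
     (q' * x.1 * y.1, [ffun i => (x.2 i + y.2 i)%N]) \in dist (RNode s l r) n) ->
  [/\ good F l a', good F r (n - a'), (a' = F l \/ a' = (F l).+1)
    & (n - a' = F r \/ n - a' = (F r).+1)%N].
Proof.
rewrite cat_uniq => /and3P [ul dlr ur] g q0 an Hm.
have disj j : j \in leaves l -> j \notin leaves r.
  by move=> jl; apply/negP => jr; move/hasP: dlr; apply; exists j.
have disj' j : j \in leaves r -> j \notin leaves l.
  by move=> jr; apply/negP => jl; move: (disj j jl); rewrite jr.
have [x0 x0d x0p] := exists_pos (dist_w1 l a').
have [y0 y0d y0p] := exists_pos (dist_w1 r (n - a')).
have inl b : List.In b (subtrees l) -> List.In b (subtrees (RNode s l r)).
  by move=> H; right; apply: List.in_or_app; left.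
have inr b : List.In b (subtrees r) -> List.In b (subtrees (RNode s l r)).
  by move=> H; right; apply: List.in_or_app; right.
split.
- move=> x xd xp b bin.
  have := g _ (Hm _ _ xd y0d) _ b (inl _ bin); rewrite /= Nnode_add.
  rewrite (@Nnode_zero b y0.2) ?addn0; first by apply; rewrite !mulr_gt0.
  move=> j jb; apply: (dist_supp y0d); apply: disj; exact: (sub_leaves bin).
- move=> y yd yp b bin.
  have := g _ (Hm _ _ x0d yd) _ b (inr _ bin); rewrite /= Nnode_add.
  rewrite (@Nnode_zero b x0.2) ?add0n; first by apply; rewrite !mulr_gt0.
  move=> j jb; apply: (dist_supp x0d); apply: disj'; exact: (sub_leaves bin).
- have := g _ (Hm _ _ x0d y0d) _ l (inl _ (subtrees_self l)); rewrite /= Nnode_add.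
  rewrite (@Nnode_zero l y0.2) ?addn0; last first.
    move=> j jb; apply: (dist_supp y0d); exact: disj.
  rewrite Nnode_tot //; last by move=> j; apply: (dist_supp x0d).
  by rewrite (dist_tot x0d); apply; rewrite !mulr_gt0.
- have := g _ (Hm _ _ x0d y0d) _ r (inr _ (subtrees_self r)); rewrite /= Nnode_add.
  rewrite (@Nnode_zero r x0.2) ?add0n; last first.
    move=> j jb; apply: (dist_supp x0d); exact: disj'.
  rewrite Nnode_tot //; last by move=> j; apply: (dist_supp y0d).
  by rewrite (dist_tot y0d); apply; rewrite !mulr_gt0.
Qed.


Definition dir (up : bool) (a b : rT) := if up then a <= b else b <= a.

Lemma wterm (a b c d : rT) : 0 <= a -> 0 <= b -> (0 < a -> 0 < b -> c <= d) ->
  0 <= a * b * (d - c).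
Proof.
move=> a0 b0 H; case: (ltrP 0 a) => ha; last by rewrite (_ : a = 0) ?mul0r //; lra.
case: (ltrP 0 b) => hb; last by rewrite (_ : b = 0) ?mulr0 ?mul0r //; lra.
by rewrite mulr_ge0 ?mulr_ge0 // subr_ge0 H.
Qed.

Lemma mixle (q0 q1 Y1 Y2 X1 X2 : rT) : 0 <= q0 <= 1 -> 0 <= q1 <= 1 ->
  (0 < q1 -> 0 < q0 -> Y1 <= X1) -> (0 < q1 -> 0 < 1 - q0 -> Y2 <= X1) ->
  (0 < 1 - q1 -> 0 < q0 -> Y1 <= X2) -> (0 < 1 - q1 -> 0 < 1 - q0 -> Y2 <= X2) ->
  q0 * Y1 + (1 - q0) * Y2 <= q1 * X1 + (1 - q1) * X2.
Proof.
move=> /andP[a0 a1] /andP[b0 b1] h1 h2 h3 h4.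
rewrite -subr_ge0.
have -> : q1 * X1 + (1 - q1) * X2 - (q0 * Y1 + (1 - q0) * Y2) =
  q1 * q0 * (X1 - Y1) + q1 * (1 - q0) * (X1 - Y2) + (1 - q1) * q0 * (X2 - Y1)
  + (1 - q1) * (1 - q0) * (X2 - Y2) by ring.
have c0 : 0 <= 1 - q0 by lra.
have c1 : 0 <= 1 - q1 by lra.
by rewrite !addr_ge0 // wterm.
Qed.

Lemma dir_mix up (q0 q1 Y1 Y2 X1 X2 : rT) : 0 <= q0 <= 1 -> 0 <= q1 <= 1 ->
  (0 < q1 -> 0 < q0 -> dir up Y1 X1) -> (0 < q1 -> 0 < 1 - q0 -> dir up Y2 X1) ->
  (0 < 1 - q1 -> 0 < q0 -> dir up Y1 X2) -> (0 < 1 - q1 -> 0 < 1 - q0 -> dir up Y2 X2) ->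
  dir up (q0 * Y1 + (1 - q0) * Y2) (q1 * X1 + (1 - q1) * X2).
Proof.
case: up => /= hq0 hq1 h1 h2 h3 h4; first exact: mixle.
apply: mixle => // ? ?; [exact: h1|exact: h3|exact: h2|exact: h4].
Qed.

Lemma dir_mull up (c a b : rT) : 0 <= c -> dir up a b -> dir up (c * a) (c * b).
Proof. by case: up => /= c0 h; apply: ler_wpM2l. Qed.

Lemma dir_mulr up (c a b : rT) : 0 <= c -> dir up a b -> dir up (a * c) (b * c).
Proof. by case: up => /= c0 h; apply: ler_wpM2r. Qed.

Lemma branchA (F : tree -> nat) s l r m :
  uniq (leaves l ++ leaves r) -> good F (RNode s l r) m -> 0 < (s m).2 ->
  [/\ good F l (minn (s m).1.1 m), good F r (m - minn (s m).1.1 m),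
      (minn (s m).1.1 m = F l \/ minn (s m).1.1 m = (F l).+1)
    & (m - minn (s m).1.1 m = F r \/ m - minn (s m).1.1 m = (F r).+1)%N].
Proof.
move=> ulr gm qp; apply: (good_branch ulr gm qp (geq_minr _ _)).
by move=> x y; apply: node_memA.
Qed.

Lemma branchB (F : tree -> nat) s l r m :
  uniq (leaves l ++ leaves r) -> good F (RNode s l r) m -> 0 < 1 - (s m).2 ->
  [/\ good F l (minn (s m).1.2 m), good F r (m - minn (s m).1.2 m),
      (minn (s m).1.2 m = F l \/ minn (s m).1.2 m = (F l).+1)
    & (m - minn (s m).1.2 m = F r \/ m - minn (s m).1.2 m = (F r).+1)%N].
Proof.
move=> ulr gm qp; apply: (good_branch ulr gm qp (geq_minr _ _)).
by move=> x y; apply: node_memB.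
Qed.

Definition br := (rT * nat * nat)%type.

Definition pic (bs : seq br) (a c : nat) : rT :=
  \sum_(b <- bs) b.1.1 * ((b.1.2 == a) && (b.2 == c))%:R.

Lemma neqS (n : nat) : (n == n.+1) = false.
Proof. by apply/eqP; lia. Qed.
Lemma neqS' (n : nat) : (n.+1 == n) = false.
Proof. by apply/eqP; lia. Qed.

Definition bvalid (Fl Fr : nat) (b : br) :=
  0 <= b.1.1 /\ (0 < b.1.1 -> (b.1.2 = Fl \/ b.1.2 = Fl.+1) /\ (b.2 = Fr \/ b.2 = Fr.+1)).

Lemma decomp (bs : seq br) Fl Fr (f : nat -> nat -> rT) :
  (forall b, b \in bs -> bvalid Fl Fr b) ->
  \sum_(b <- bs) b.1.1 * f b.1.2 b.2 =
    pic bs Fl Fr * f Fl Fr + pic bs Fl Fr.+1 * f Fl Fr.+1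
  + pic bs Fl.+1 Fr * f Fl.+1 Fr + pic bs Fl.+1 Fr.+1 * f Fl.+1 Fr.+1.
Proof.
rewrite /pic; elim: bs => [|b bs IH] H.
  by rewrite !big_nil; ring.
rewrite !big_cons IH; last by move=> b' b'in; apply: H; rewrite inE b'in orbT.
have [w0 hv] := H b (mem_head _ _).
case: (ltrP 0 b.1.1) => wp; last first.
  have -> : b.1.1 = 0 by lra.
  by rewrite !mul0r !add0r.
have [[->|->] [->|->]] := hv wp; rewrite /= !eqxx ?neqS ?neqS' /=; ring.
Qed.

Lemma pic_ge0 (bs : seq br) a c : (forall b, b \in bs -> 0 <= b.1.1) -> 0 <= pic bs a c.
Proof.
move=> H; rewrite /pic big_seq; apply: sumr_ge0 => b bin.
by rewrite mulr_ge0 ?H.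
Qed.

Lemma pic_zero (bs : seq br) a c :
  (forall b, b \in bs -> 0 <= b.1.1 /\ (0 < b.1.1 -> ~ (b.1.2 = a /\ b.2 = c))) ->
  pic bs a c = 0.
Proof.
move=> H; rewrite /pic big1_seq // => b /andP[_ bin].
have [w0 hv] := H b bin.
case: (ltrP 0 b.1.1) => wp; last by rewrite (_ : b.1.1 = 0) ?mul0r //; lra.
case: (boolP ((b.1.2 == a) && (b.2 == c))) => [/andP[/eqP e1 /eqP e2]|_].
  by exfalso; apply: (hv wp).
by rewrite mulr0.
Qed.

Lemma pic_pos (bs : seq br) a c : (forall b, b \in bs -> 0 <= b.1.1) ->
  0 < pic bs a c -> exists2 b, b \in bs & [/\ 0 < b.1.1, b.1.2 = a & b.2 = c].
Proof.
move=> H hp.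
case: (boolP (has (fun b : br => (0 < b.1.1) && (b.1.2 == a) && (b.2 == c)) bs)).
  by move=> /hasP [b bin /andP[/andP[h1 /eqP h2] /eqP h3]]; exists b.
move=> /hasPn Hn; exfalso.
suff : pic bs a c = 0 by move=> e; move: hp; rewrite e ltxx.
apply: pic_zero => b bin; split; first exact: H.
move=> wp [e1 e2]; move: (Hn b bin); rewrite wp e1 e2 !eqxx.
by [].
Qed.

Lemma cov_le (p00 p01 p10 p11 g0 g1 h0 h1 : rT) :
  0 <= p00 -> 0 <= p01 -> 0 <= p10 -> 0 <= p11 ->
  p00 + p01 + p10 + p11 = 1 -> p11 = 0 \/ p00 = 0 ->
  (0 < p10 -> 0 < p01 -> 0 <= (g1 - g0) * (h1 - h0)) ->
  p00 * (g0 * h0) + p01 * (g0 * h1) + p10 * (g1 * h0) + p11 * (g1 * h1)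
  <= ((p00 + p01) * g0 + (p10 + p11) * g1) * ((p00 + p10) * h0 + (p01 + p11) * h1).
Proof.
move=> a0 a1 a2 a3 hs hz hm.
have e : p00 = 1 - p01 - p10 - p11 by lra.
rewrite -subr_ge0.
have -> : ((p00 + p01) * g0 + (p10 + p11) * g1) * ((p00 + p10) * h0 + (p01 + p11) * h1)
  - (p00 * (g0 * h0) + p01 * (g0 * h1) + p10 * (g1 * h0) + p11 * (g1 * h1))
  = (p10 * p01 - p11 * p00) * ((g1 - g0) * (h1 - h0)).
  by rewrite e; ring.
have := @wterm p10 p01 0 ((g1 - g0) * (h1 - h0)) a2 a1 hm; rewrite subr0.
by case: hz => ->; rewrite ?mul0r ?mulr0 subr0.
Qed.

Lemma dir_prod up (a b c d : rT) : dir up a b -> dir up c d -> 0 <= (b - a) * (d - c).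
Proof.
case: up => /= h1 h2; first by rewrite mulr_ge0 // subr_ge0.
by rewrite -mulrNN !opprB mulr_ge0 // subr_ge0.
Qed.

Lemma pos_prod (a b : rT) : 0 <= a -> 0 <= b -> 0 < a * b -> 0 < a /\ 0 < b.
Proof.
move=> a0 b0 h; split.
  by case: (ltrP 0 a) => // ha; move: h; rewrite (_ : a = 0) ?mul0r ?ltxx //; lra.
by case: (ltrP 0 b) => // hb; move: h; rewrite (_ : b = 0) ?mulr0 ?ltxx //; lra.
Qed.

Definition bs (s : nat -> nat * nat * rT) (n0 : nat) (p : rT) : seq br :=
  [:: ((1 - p) * (s n0).2, minn (s n0).1.1 n0, (n0 - minn (s n0).1.1 n0)%N);
      ((1 - p) * (1 - (s n0).2), minn (s n0).1.2 n0, (n0 - minn (s n0).1.2 n0)%N);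
      (p * (s n0.+1).2, minn (s n0.+1).1.1 n0.+1, (n0.+1 - minn (s n0.+1).1.1 n0.+1)%N);
      (p * (1 - (s n0.+1).2), minn (s n0.+1).1.2 n0.+1, (n0.+1 - minn (s n0.+1).1.2 n0.+1)%N)].

Lemma mixE s l r n0 (p : rT) (X phi psi : outc -> rT) :
  (forall a c x y, x \in dist l a -> y \in dist r c ->
     X [ffun i => (x.2 i + y.2 i)%N] = phi x.2 * psi y.2) ->
  (1 - p) * Expect (dist (RNode s l r) n0) X + p * Expect (dist (RNode s l r) n0.+1) X
  = \sum_(b <- bs s n0 p) b.1.1 * (Expect (dist l b.1.2) phi * Expect (dist r b.2) psi).
Proof.
move=> H; rewrite !(Expect_node _ _ H) /bs !big_cons big_nil /=; ring.
Qed.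

Section Mono.
Variables (w : 'I_R -> rT) (up : bool) (F : tree -> nat).
Hypothesis hw0 : forall i, 0 <= w i.
Hypothesis hwd : forall i, dir up 1 (w i).

Definition G t n := Expect (dist t n) (fun x : outc => \prod_i w i ^+ x i).

Lemma G_ge0 t n : rules_ok t -> 0 <= G t n.
Proof.
move=> ok; rewrite /G /Expect big_seq; apply: sumr_ge0 => x xd.
rewrite mulr_ge0 ?(dist_w_ge0 ok xd) //; apply: prodr_ge0 => i _.
exact: exprn_ge0.
Qed.

Lemma G_leaf j n : G (RLeaf j) n = w j ^+ n.
Proof.
rewrite /G /Expect big_seq1 /= mul1r (bigD1 j) //= ffunE eqxx big1 ?mulr1 //.
by move=> i /negPf; rewrite ffunE => ->.
Qed.

Lemma G_node s l r n : G (RNode s l r) n =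
    (s n).2 * G l (minn (s n).1.1 n) * G r (n - minn (s n).1.1 n)
  + (1 - (s n).2) * G l (minn (s n).1.2 n) * G r (n - minn (s n).1.2 n).
Proof.
rewrite /G (@Expect_node _ _ _ _ _ (fun x : outc => \prod_i w i ^+ x i)
                          (fun x : outc => \prod_i w i ^+ x i)) //.
by move=> a c x y _ _; rewrite -big_split /=; apply: eq_bigr => i _; rewrite ffunE exprD.
Qed.

Lemma Mono t : rules_ok t -> uniq (leaves t) -> forall n,
  good F t n -> good F t n.+1 -> dir up (G t n) (G t n.+1).
Proof.
elim: t => [j|s l IHl r IHr] ok u n g0 g1.
  rewrite !G_leaf exprS; move: (hwd j) (exprn_ge0 n (hw0 j)).
  case: up => /= h h0.
    by rewrite -{1}[w j ^+ n]mul1r; apply: ler_wpM2r.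
  by rewrite -{2}[w j ^+ n]mul1r; apply: ler_wpM2r.
have [hs [okl okr]] := ok.
have ulr : uniq (leaves l ++ leaves r) by [].
have ul : uniq (leaves l) by move: u => /=; rewrite cat_uniq => /and3P[].
have ur : uniq (leaves r) by move: u => /=; rewrite cat_uniq => /and3P[].
have cmp a1 a0 : (a1 <= n.+1)%N -> (a0 <= n)%N ->
   [/\ good F l a1, good F r (n.+1 - a1), (a1 = F l \/ a1 = (F l).+1)
    & (n.+1 - a1 = F r \/ n.+1 - a1 = (F r).+1)%N] ->
   [/\ good F l a0, good F r (n - a0), (a0 = F l \/ a0 = (F l).+1)
    & (n - a0 = F r \/ n - a0 = (F r).+1)%N] ->
   dir up (G l a0 * G r (n - a0)) (G l a1 * G r (n.+1 - a1)).
  move=> h1 h0 [gl1 gr1 e1 f1] [gl0 gr0 e0 f0].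
  have : a1 = a0 \/ a1 = a0.+1 by lia.
  case=> ?; subst a1.
    have e : (n.+1 - a0 = (n - a0).+1)%N by rewrite subSn.
    rewrite e in gr1 *; apply: (dir_mull (G_ge0 _ okl)).
    exact: (IHr okr ur _ gr0 gr1).
  rewrite subSS; apply: (dir_mulr (G_ge0 _ okr)).
  exact: (IHl okl ul _ gl0 gl1).
rewrite !G_node.
have hq m : 0 <= (s m).2 <= 1 by [].
have brA m := @branchA F s l r m ulr.
have brB m := @branchB F s l r m ulr.
rewrite -!mulrA; apply: dir_mix => // h1 h2.
- by apply: cmp; [exact: geq_minr|exact: geq_minr|exact: brA|exact: brA].
- by apply: cmp; [exact: geq_minr|exact: geq_minr|exact: brA|exact: brB].
- by apply: cmp; [exact: geq_minr|exact: geq_minr|exact: brB|exact: brA].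
- by apply: cmp; [exact: geq_minr|exact: geq_minr|exact: brB|exact: brB].
Qed.


Definition E t n (j : 'I_R) := Expect (dist t n) (fun x : outc => ((x j)%:R : rT)).
Definition term (j : 'I_R) (P : rT) :=
  (1 - P) * w j ^+ F (RLeaf j) + P * w j ^+ (F (RLeaf j)).+1.
Definition PP t (p : rT) j :=
  (1 - p) * E t (F t) j + p * E t (F t).+1 j - (F (RLeaf j))%:R.

Lemma Main t : rules_ok t -> uniq (leaves t) -> forall p : rT, 0 <= p <= 1 ->
  (p < 1 -> good F t (F t)) -> (0 < p -> good F t (F t).+1) ->
  (1 - p) * G t (F t) + p * G t (F t).+1 <= \prod_(j <- leaves t) term j (PP t p j).
Proof.
elim: t => [j|s l IHl r IHr] ok u p hp g0 g1.
  rewrite big_seq1 !G_leaf /term /PP /E /Expect !big_seq1 /= !mul1r !ffunE eqxx.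
  have -> : (1 - p) * (F (RLeaf j))%:R + p * (F (RLeaf j)).+1%:R - (F (RLeaf j))%:R = p.
    by rewrite -addn1 natrD; ring.
  by [].
have [hs [okl okr]] := ok.
have ulr : uniq (leaves l ++ leaves r) by [].
have ul : uniq (leaves l) by move: u => /=; rewrite cat_uniq => /and3P[].
have ur : uniq (leaves r) by move: u => /=; rewrite cat_uniq => /and3P[].
have disj j : j \in leaves l -> j \notin leaves r.
  move: u => /=; rewrite cat_uniq => /and3P[_ dlr _] jl.
  by apply/negP => jr; move/hasP: dlr; apply; exists j.
have disj' j : j \in leaves r -> j \notin leaves l.
  by move=> jr; apply/negP => jl; move: (disj j jl); rewrite jr.
have hv : forall b, b \in bs s (F (RNode s l r)) p -> 0 <= b.1.1 /\
   (0 < b.1.1 -> [/\ good F l b.1.2, good F r b.2, (b.1.2 = F l \/ b.1.2 = (F l).+1)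
       & (b.2 = F r \/ b.2 = (F r).+1)]
     /\ (b.1.2 + b.2 = F (RNode s l r) \/ b.1.2 + b.2 = (F (RNode s l r)).+1)%N).
  have hq m : 0 <= (s m).2 <= 1 by [].
  move=> b; rewrite !inE => /or4P [] /eqP -> /=.
  - have := hq (F (RNode s l r)); move=> hqm; split; first by apply: mulr_ge0; lra.
    move=> /pos_prod [] //; [lra|lra|] => h1 h2; split.
      by apply: branchA => //; apply: g0; lra.
    by left; rewrite subnKC // geq_minr.
  - have := hq (F (RNode s l r)); move=> hqm; split; first by apply: mulr_ge0; lra.
    move=> /pos_prod [] //; [lra|lra|] => h1 h2; split.
      by apply: branchB => //; apply: g0; lra.
    by left; rewrite subnKC // geq_minr.
  - have := hq (F (RNode s l r)).+1; move=> hqm; split; first by apply: mulr_ge0; lra.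
    move=> /pos_prod [] //; [lra|lra|] => h1 h2; split.
      by apply: branchA => //; apply: g1.
    by right; rewrite subnKC // geq_minr.
  - have := hq (F (RNode s l r)).+1; move=> hqm; split; first by apply: mulr_ge0; lra.
    move=> /pos_prod [] //; [lra|lra|] => h1 h2; split.
      by apply: branchB => //; apply: g1.
    by right; rewrite subnKC // geq_minr.
have hw0' b : b \in bs s (F (RNode s l r)) p -> 0 <= b.1.1 by move=> /hv[].
have hbv b : b \in bs s (F (RNode s l r)) p -> bvalid (F l) (F r) b.
  move=> /hv [h1 h2]; split => // /h2 [[_ _ e1 e2] _]; by split.
have sum1 : pic (bs s (F (RNode s l r)) p) (F l) (F r) + pic (bs s (F (RNode s l r)) p) (F l) (F r).+1
   + pic (bs s (F (RNode s l r)) p) (F l).+1 (F r) + pic (bs s (F (RNode s l r)) p) (F l).+1 (F r).+1 = 1.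
  have := decomp (fun _ _ => (1 : rT)) hbv; rewrite !mulr1 => <-.
  by rewrite /bs !big_cons big_nil /=; ring.
set B := bs s (F (RNode s l r)) p in hv hw0' hbv sum1 *.
set P00 := pic B (F l) (F r) in sum1 *.
set P01 := pic B (F l) (F r).+1 in sum1 *.
set P10 := pic B (F l).+1 (F r) in sum1 *.
set P11 := pic B (F l).+1 (F r).+1 in sum1 *.
have q00 : 0 <= P00 by apply: pic_ge0.
have q01 : 0 <= P01 by apply: pic_ge0.
have q10 : 0 <= P10 by apply: pic_ge0.
have q11 : 0 <= P11 by apply: pic_ge0.
have hz : P11 = 0 \/ P00 = 0.
  case: (leqP (F (RNode s l r)) (F l + F r)) => h; [left|right]; apply: pic_zero => b bin;
    have [w0 hb] := hv b bin; split => // wp [e1 e2]; have [_ hs'] := hb wp;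
    move: h hs'; rewrite e1 e2; generalize (F (RNode s l r)) (F l) (F r); clear; lia.
have gof a c : 0 < pic B a c -> good F l a /\ good F r c.
  move=> /(pic_pos hw0') [b bin [wp e1 e2]]; have [_ hb] := hv b bin.
  by have [[gl gr _ _] _] := hb wp; rewrite -e1 -e2.
have pos2 (x y : rT) : 0 <= x -> 0 <= y -> 0 < x + y -> 0 < x \/ 0 < y.
  move=> hx hy hxy; case: (ltrP 0 x) => h; [by left|right; lra].
have eG : (1 - p) * G (RNode s l r) (F (RNode s l r)) + p * G (RNode s l r) (F (RNode s l r)).+1
   = \sum_(b <- B) b.1.1 * (G l b.1.2 * G r b.2).
  rewrite /G; apply: mixE.
  by move=> a c x y _ _; rewrite -big_split /=; apply: eq_bigr => i _; rewrite ffunE exprD.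
rewrite eG (decomp (fun a c => G l a * G r c) hbv).
apply: le_trans.
  apply: (cov_le q00 q01 q10 q11 sum1 hz) => h10 h01.
  apply: (@dir_prod up).
    apply: Mono => //; [exact: (gof _ _ h01).1 | exact: (gof _ _ h10).1].
  apply: Mono => //; [exact: (gof _ _ h10).2 | exact: (gof _ _ h01).2].
rewrite /= big_cat /=.
have hl : (P00 + P01) * G l (F l) + (P10 + P11) * G l (F l).+1
   <= \prod_(j <- leaves l) term j (PP l (P10 + P11) j).
  rewrite (_ : P00 + P01 = 1 - (P10 + P11)); last by lra.
  apply: IHl => //; first by apply/andP; split; lra.
    by move=> h; have [h'|h'] := pos2 _ _ q00 q01 ltac:(lra); [exact: (gof _ _ h').1|exact: (gof _ _ h').1].
  by move=> h; have [h'|h'] := pos2 _ _ q10 q11 h; [exact: (gof _ _ h').1|exact: (gof _ _ h').1].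
have hr : (P00 + P10) * G r (F r) + (P01 + P11) * G r (F r).+1
   <= \prod_(j <- leaves r) term j (PP r (P01 + P11) j).
  rewrite (_ : P00 + P10 = 1 - (P01 + P11)); last by lra.
  apply: IHr => //; first by apply/andP; split; lra.
    by move=> h; have [h'|h'] := pos2 _ _ q00 q10 ltac:(lra); [exact: (gof _ _ h').2|exact: (gof _ _ h').2].
  by move=> h; have [h'|h'] := pos2 _ _ q01 q11 h; [exact: (gof _ _ h').2|exact: (gof _ _ h').2].
apply: le_trans.
  apply: ler_pM; [| |exact: hl|exact: hr].
    by rewrite addr_ge0 // mulr_ge0 ?addr_ge0 // G_ge0.
  by rewrite addr_ge0 // mulr_ge0 ?addr_ge0 // G_ge0.
have e00 : P00 = 1 - P01 - P10 - P11 by lra.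
have ePl j : j \in leaves l -> PP (RNode s l r) p j = PP l (P10 + P11) j.
  move=> jl; rewrite /PP /E.
  rewrite (@mixE s l r _ p _ (fun x : outc => ((x j)%:R : rT)) (fun _ => 1)); last first.
    by move=> a c x y _ yd; rewrite ffunE (dist_supp yd (disj j jl)) addn0 mulr1.
  under eq_bigr do rewrite dist_w1 mulr1.
  rewrite (decomp (fun a c => Expect (dist l a) (fun x : outc => ((x j)%:R : rT))) hbv).
  rewrite -/P00 -/P01 -/P10 -/P11 e00; ring.
have ePr j : j \in leaves r -> PP (RNode s l r) p j = PP r (P01 + P11) j.
  move=> jr; rewrite /PP /E.
  rewrite (@mixE s l r _ p _ (fun _ => 1) (fun x : outc => ((x j)%:R : rT))); last first.
    by move=> a c x y xd _; rewrite ffunE (dist_supp xd (disj' j jr)) add0n mul1r.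
  under eq_bigr do rewrite dist_w1 mul1r.
  rewrite (decomp (fun a c => Expect (dist r c) (fun x : outc => ((x j)%:R : rT))) hbv).
  rewrite -/P00 -/P01 -/P10 -/P11 e00; ring.
rewrite [X in _ <= X * _](eq_big_seq (fun j => term j (PP l (P10 + P11) j))); last by move=> j jl; rewrite ePl.
rewrite [X in _ <= _ * X](eq_big_seq (fun j => term j (PP r (P01 + P11) j))); last by move=> j jr; rewrite ePr.
by [].
Qed.

End Mono.
End Core.

Section Fin.
Variables (rT : realType) (R : nat) (pi : 'I_R -> rT) (N : nat) (t : rtree rT R).
Hypothesis hpi0 : forall j, 0 <= pi j.
Hypothesis hsum : \sum_j pi j = 1.
Hypothesis htr : tree_resampling N pi t.

Definition FF (b : rtree rT R) : nat := `|Num.floor (mu N pi b)|%N.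

Lemma mu_ge0 b : 0 <= mu N pi b.
Proof. by rewrite /mu mulr_ge0 // sumr_ge0. Qed.

Lemma FF_eq b : (FF b)%:Z = Num.floor (mu N pi b).
Proof. by rewrite /FF gez0_abs // floor_ge0 mu_ge0. Qed.

Lemma u_t : uniq (leaves t).
Proof. by case: htr => hp _ _; rewrite (perm_uniq hp) enum_uniq. Qed.

Lemma in_t j : j \in leaves t.
Proof. by case: htr => hp _ _; rewrite (perm_mem hp) mem_enum. Qed.

Lemma ok_t : rules_ok t.
Proof. by case: htr. Qed.

Lemma sum_leaves (f : 'I_R -> rT) : \sum_(j <- leaves t) f j = \sum_j f j.
Proof. by case: htr => hp _ _; rewrite (perm_big _ hp) big_enum. Qed.

Lemma prod_leaves (f : 'I_R -> rT) : \prod_(j <- leaves t) f j = \prod_j f j.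
Proof. by case: htr => hp _ _; rewrite (perm_big _ hp) big_enum. Qed.

Lemma FF_t : FF t = N.
Proof.
apply/eqP; rewrite -eqz_nat FF_eq /mu sum_leaves hsum mulr1.
by rewrite pmulrn intrKfloor.
Qed.

Lemma good_t : good FF t N.
Proof.
case: htr => _ _ H x xd xp b bin.
have [H1 _] := H b bin; move: (H1 x xd xp); rewrite -FF_eq.
case/orP => /eqP; first by move=> [->]; left.
by move=> e; right; apply/eqP; rewrite -eqz_nat e -addn1 PoszD.
Qed.


Lemma mu_leaf j : mu N pi (RLeaf j) = N%:R * pi j.
Proof. by rewrite /mu big_seq1. Qed.

Lemma E_t j : E t N j = N%:R * pi j.
Proof.
case: htr => _ _ H; have [_ H2] := H _ (leaf_in (in_t j)).
rewrite mu_leaf in H2; rewrite -H2 /E /Expect; apply: eq_bigr => x _.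
by rewrite /Nnode big_seq1.
Qed.

Lemma P_bounds j : 0 <= N%:R * pi j - (FF (RLeaf j))%:R <= 1.
Proof.
have e : ((FF (RLeaf j))%:R : rT) = (Num.floor (mu N pi (RLeaf j)))%:~R by rewrite -FF_eq.
rewrite e; have h1 := floor_le (mu N pi (RLeaf j)).
have h2 := floorD1_gt (mu N pi (RLeaf j)).
rewrite intrD mu_leaf in h1 h2 *; apply/andP; split; lra.
Qed.

Definition D (B : {set 'I_R}) (x : outcome R) : rT :=
  \sum_(j in B) ((x j)%:R - N%:R * pi j).
Definition M (B : {set 'I_R}) (l : rT) :=
  Expect (dist t N) (fun x => expR (l * D B x)).

Lemma mgf B l : M B l <= expR (#|B|%:R * (8^-1 * (l * l))).
Proof.
pose w := fun j => if j \in B then expR l else 1.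
have hw0 j : 0 <= w j by rewrite /w; case: (j \in B) => //; exact: expR_ge0.
have hwd j : dir (0 <= l) 1 (w j).
  rewrite /w /dir; case: (j \in B); last by case: (0 <= l).
  by case: (lerP 0 l) => h; rewrite -expR0 ler_expR // ltW.
have hM := @Main rT R w (0 <= l) FF hw0 hwd t ok_t u_t 0 ltac:(by rewrite lexx ler01)
  (fun _ => ltac:(by rewrite FF_t; exact: good_t)) (fun h => ltac:(by rewrite ltxx in h)).
rewrite FF_t subr0 mul1r mul0r addr0 prod_leaves in hM.
have ePP j : PP FF t 0 j = N%:R * pi j - (FF (RLeaf j))%:R.
  by rewrite /PP FF_t subr0 mul1r mul0r addr0 E_t.
pose C := \prod_(j in B) expR (- (l * (N%:R * pi j))).
have eM : M B l = C * G w t N.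
  rewrite /M /G /Expect mulr_sumr; apply: eq_bigr => x _.
  rewrite mulrCA; congr (_ * _).
  have ew : \prod_i w i ^+ x.2 i = \prod_(i in B) expR l ^+ x.2 i.
    rewrite [RHS]big_mkcond; apply: eq_bigr => i _.
    by rewrite /w; case: (i \in B) => //; rewrite expr1n.
  rewrite ew /D mulr_sumr expR_sum /C -big_split /=; apply: eq_bigr => i _.
  by rewrite mulrBr expRD expRM_natr mulrC.
rewrite eM.
apply: (le_trans (ler_wpM2l _ hM)); first by apply: prodr_ge0 => j _; exact: expR_ge0.
rewrite [X in C * X](bigID (mem B)) /=.
rewrite [X in C * (_ * X)]big1; last first.
  by move=> j /negPf jB; rewrite /term /w jB !expr1n !mulr1; ring.
rewrite mulr1 /C -big_split /=.
rewrite expRM_natl -prodr_const.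
apply: ler_prod => j jB; apply/andP; split.
  rewrite mulr_ge0 ?expR_ge0 // /term addr_ge0 // mulr_ge0 ?exprn_ge0 ?hw0 //.
    by have := P_bounds j; rewrite ePP; lra.
  by have := P_bounds j; rewrite ePP; lra.
rewrite ePP /term /w jB.
set P := N%:R * pi j - (FF (RLeaf j))%:R.
have -> : (1 - P) * expR l ^+ FF (RLeaf j) + P * expR l ^+ (FF (RLeaf j)).+1
   = expR l ^+ FF (RLeaf j) * (1 - P + P * expR l) by rewrite exprS; ring.
apply: le_trans.
  apply: ler_wpM2l; first exact: expR_ge0.
  apply: ler_wpM2l; first exact: exprn_ge0 (expR_ge0 _).
  exact: (@hoeff_lemma rT _ (P_bounds j) l).
rewrite -expRM_natl -!expRD.
rewrite /P ler_expR le_eqVlt; apply/orP; left; apply/eqP; ring.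
Qed.


Lemma D_compl B x : x \in dist t N -> D B x.2 = - D (~: B) x.2.
Proof.
move=> xd.
have e : \sum_j (((x.2 j)%:R : rT) - N%:R * pi j) = D B x.2 + D (~: B) x.2.
  rewrite (bigID (mem B)) /=; congr (_ + _); apply: eq_bigl => j.
  by rewrite finset.in_setC.
have e2 : \sum_j (((x.2 j)%:R : rT) - N%:R * pi j) = 0.
  by rewrite sumrB -natr_sum (dist_tot xd) -mulr_sumr hsum mulr1 subrr.
by apply/eqP; rewrite -subr_eq0 opprK -e e2.
Qed.

Lemma M_compl B l : M B l = M (~: B) (- l).
Proof.
rewrite /M /Expect; apply: eq_big_seq => x xd.
by rewrite (D_compl B xd) mulrN mulNr.
Qed.

Lemma mgf2 B l : M B l <= expR (R%:R / 16 * (l * l)).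
Proof.
have hc := cardsC B; rewrite card_ord in hc.
have hl : 0 <= l * l by rewrite -expr2 sqr_ge0.
have key (k : nat) : (k * 2 <= R)%N ->
    k%:R * (8^-1 * (l * l)) <= R%:R / 16 * (l * l) :> rT.
  move=> hk; rewrite -subr_ge0.
  have -> : R%:R / 16 * (l * l) - k%:R * (8^-1 * (l * l)) =
    (R%:R - k%:R * 2) * (l * l) / 16 :> rT by field.
  apply: divr_ge0 => //; apply: mulr_ge0 => //.
  by rewrite subr_ge0 -natrM ler_nat.
case: (leqP (#|B| * 2) R) => h.
  apply: le_trans (mgf B l) _; rewrite ler_expR; exact: key.
rewrite M_compl; apply: le_trans (mgf _ _) _; rewrite ler_expR mulrNN.
apply: key; lia.
Qed.

Lemma tail B eps : 0 < eps -> (0 < R)%N ->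
  Prob (dist t N) (fun x => eps <= `|D B x|) <= 2 * expR (- (4 * eps ^+ 2 / R%:R)).
Proof.
move=> he hR.
have hR' : (0 : rT) < R%:R by rewrite ltr0n.
pose l := 8 * eps / R%:R.
have hl : 0 <= l by rewrite /l divr_ge0 // ?mulr_ge0 // ltW.
pose c := expR (- (l * eps)).
have hc : 0 <= c by exact: expR_ge0.
apply: (@le_trans _ _ (Expect (dist t N) (fun x => expR (l * D B x) * c + expR (- l * D B x) * c))).
  rewrite /Prob /Expect big_mkcond /= big_seq [X in _ <= X]big_seq.
  apply: ler_sum => x xd.
  have p0 := dist_w_ge0 ok_t xd.
  have g0 : 0 <= expR (l * D B x.2) * c + expR (- l * D B x.2) * c.
    by rewrite addr_ge0 // mulr_ge0 // expR_ge0.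
  case: ifP => hE; last by rewrite mulr_ge0.
  apply: ler_peMr => //.
  have a1 := expR_ge0 (l * D B x.2); have a2 := expR_ge0 (- l * D B x.2).
  case: (lerP 0 (D B x.2)) => hD.
    rewrite ger0_norm // in hE.
    have : 1 <= expR (l * D B x.2) * c.
      rewrite /c -expRD -expR0 ler_expR.
      have -> : l * D B x.2 + - (l * eps) = l * (D B x.2 - eps) by ring.
      by rewrite mulr_ge0 // subr_ge0.
    have : 0 <= expR (- l * D B x.2) * c by rewrite mulr_ge0.
    lra.
  rewrite ltr0_norm // in hE.
  have : 1 <= expR (- l * D B x.2) * c.
    rewrite /c -expRD -expR0 ler_expR.
    have -> : - l * D B x.2 + - (l * eps) = l * (- D B x.2 - eps) by ring.
    by rewrite mulr_ge0 // subr_ge0.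
  have : 0 <= expR (l * D B x.2) * c by rewrite mulr_ge0.
  lra.
have -> : Expect (dist t N) (fun x => expR (l * D B x) * c + expR (- l * D B x) * c)
    = c * (M B l + M B (- l)).
  rewrite /M /Expect -big_split mulr_sumr /=; apply: eq_bigr => x _; ring.
apply: le_trans.
  by apply: (ler_wpM2l hc); apply: lerD; exact: mgf2.
rewrite mulrNN mulrDr /c -expRD.
have -> : - (l * eps) + R%:R / 16 * (l * l) = - (4 * eps ^+ 2 / R%:R).
  by rewrite /l; field; rewrite gt_eqF.
lra.
Qed.

End Fin.

Theorem lemma5 (rT : realType) (R : nat) (pi : 'I_R -> rT) (N : nat)
  (t : rtree rT R) :
  (forall j, 0 <= pi j) -> \sum_j pi j = 1 ->
  tree_resampling N pi t ->
  forall eps : rT, 0 < eps ->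
  forall A : {set 'I_R},
    Prob (dist t N)
      (fun x : outcome R => eps <= `|\sum_(j in A) ((x j)%:R - N%:R * pi j)|)
    <= 2 * expR (- (4 * eps ^+ 2 / R%:R)).
Proof.
move=> hpi0 hsum htr eps he A.
have hR : (0 < R)%N.
  rewrite lt0n; apply/eqP => R0.
  have : \sum_j pi j = 0.
    by apply: big1 => j _; have := ltn_ord j; rewrite {2}R0.
  by rewrite hsum => /eqP; rewrite oner_eq0.
exact: (tail hpi0 hsum htr A he hR).
Qed.
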